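(* Let $I \subset K[x,y]$ be a monomial ideal with $G(I)=\{u_0,\ldots,u_m\}$, $u_i=x^{a_i}y^{b_i}$, ordered so that $a_0>a_1>\cdots>a_m$ and $b_0<b_1<\cdots<b_m$, and let $d_i=\deg(u_i)=a_i+b_i$. Then $I$ is componentwise polymatroidal if and only if all of the following hold: (i) for each $0\le i<m$ with $d_i>d_{i+1}$: $a_i-1>a_{i+1}$ and $b_{i+1}=b_i+1$; (ii) for each $0\le i<m$ with $d_i<d_{i+1}$: $b_i+1<b_{i+1}$ and $a_{i+1}=a_i-1$; (iii) for each $0\le i<m$ with $d_i=d_{i+1}$: $b_{i+1}=b_i+1$ and $a_{i+1}=a_i-1$; (iv) there exists $0\le j\le m$ with $d_0\ge d_1\ge\cdots\ge d_j\le d_{j+1}\le\cdots\le d_m$.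
   Context: $G(I)$ is the minimal monomial generating set; $\deg_{x}(u)$ is the exponent of $x$ in $u$. A monomial ideal generated in a single degree is polymatroidal if for all $u,v\in G(I)$ and all variables $z$ with $\deg_{z}(u)>\deg_{z}(v)$ there exists a variable $w$ with $\deg_{w}(u)<\deg_{w}(v)$ and $w(u/z)\in I$. $I_{\langle j\rangle}$ denotes the ideal generated by all monomials of degree $j$ in $I$; $I$ is componentwise polymatroidal if every nonzero $I_{\langle j\rangle}$ is polymatroidal. *)

(* Defs.v *)
(* Monomials of K[x,y] are represented by exponent pairs
   (a,b) <-> x^a y^b.  A monomial ideal of K[x,y] is determined by the set of
   monomials it contains, which is an up-closed (under divisibility) subset
   of N^2; the field K plays no role in any notion below. *)
From Stdlib Require Import Arith Lia.

Definition mono := (nat * nat)%type.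

(* variables: false = x, true = y;  degz z u = deg_z(u) *)
Definition degz (z : bool) (u : mono) : nat := if z then snd u else fst u.

Definition mdeg (u : mono) : nat := fst u + snd u.

Definition mdiv (u v : mono) : Prop := fst u <= fst v /\ snd u <= snd v.

Definition mideal := mono -> Prop.

Definition is_monomial_ideal (I : mideal) : Prop :=
  forall u v, I u -> mdiv u v -> I v.

Definition Gens (I : mideal) (u : mono) : Prop :=
  I u /\ forall v, I v -> mdiv v u -> v = u.

Definition comp (I : mideal) (j : nat) : mideal :=
  fun w => exists u, I u /\ mdeg u = j /\ mdiv u w.

Definition nonzero (I : mideal) : Prop := exists u, I u.

Definition decr (z : bool) (u : mono) : mono :=
  if z then (fst u, snd u - 1) else (fst u - 1, snd u).
Definition incr (w : bool) (u : mono) : mono :=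
  if w then (fst u, snd u + 1) else (fst u + 1, snd u).
Definition exch (w z : bool) (u : mono) : mono := incr w (decr z u).

Definition single_degree (I : mideal) : Prop :=
  exists d, forall u, Gens I u -> mdeg u = d.

Definition polymatroidal (I : mideal) : Prop :=
  single_degree I /\
  forall u v, Gens I u -> Gens I v ->
  forall z, degz z u > degz z v ->
  exists w, degz w u < degz w v /\ I (exch w z u).

Definition componentwise_polymatroidal (I : mideal) : Prop :=
  forall j, nonzero (comp I j) -> polymatroidal (comp I j).

(* Main.v *)
Require Import Defs.
From Stdlib Require Import Arith Lia Classical.

Lemma largest (P : nat -> Prop) lo hi :
  lo <= hi -> P lo ->
  exists p, lo <= p <= hi /\ P p /\ forall l, p < l <= hi -> ~ P l.
Proof.
  intros Hle HP. induction hi as [|hi IH].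
  - exists lo. split; [lia|split; [auto|intros; lia]].
  - destruct (classic (P (S hi))) as [H|H].
    + exists (S hi). split; [lia|split; [auto|intros; lia]].
    + destruct (Nat.eq_dec lo (S hi)) as [E|E].
      * subst. contradiction.
      * destruct IH as [p [Hp1 [Hp2 Hp3]]]; [lia|].
        exists p. split; [lia|split; [auto|]].
        intros l Hl. destruct (Nat.eq_dec l (S hi)); [subst; auto|apply Hp3; lia].
Qed.

Lemma smallest (P : nat -> Prop) lo hi :
  lo <= hi -> P hi ->
  exists k, lo <= k <= hi /\ P k /\ forall l, lo <= l < k -> ~ P l.
Proof.
  intros Hle HP.
  destruct (largest (fun x => P (hi + lo - x)) lo hi Hle) as [p [Hp1 [Hp2 Hp3]]].
  { replace (hi + lo - lo) with hi by lia. exact HP. }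
  exists (hi + lo - p). split; [lia|split; [exact Hp2|]].
  intros l Hl HPl. apply (Hp3 (hi + lo - l)); [lia|].
  replace (hi + lo - (hi + lo - l)) with l by lia. exact HPl.
Qed.

Lemma bump (d : nat -> nat) i0 q k :
  i0 < q -> q < k -> d i0 < d q -> d k < d q ->
  exists p k', i0 <= p /\ p + 2 <= k' /\ k' <= k /\
    forall l, p < l < k' -> d l > Nat.max (d p) (d k').
Proof.
  intros H1 H2 H3 H4.
  destruct (smallest (fun x => d x <= Nat.max (d i0) (d k)) (S q) k) as [k' [Hk1 [Hk2 Hk3]]];
    [lia| lia |].
  destruct (largest (fun x => d x <= Nat.max (d i0) (d k)) i0 (k' - 1)) as [p [Hp1 [Hp2 Hp3]]];
    [lia| lia|].
  exists p, k'.
  assert (p < q).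
  { destruct (Nat.lt_ge_cases p q) as [h|h]; auto. exfalso.
    destruct (Nat.eq_dec p q). { subst. lia. }
    apply (Hk3 p); [lia|auto]. }
  split; [lia|split;[lia|split;[lia|]]].
  intros l Hl.
  assert (~ d l <= Nat.max (d i0) (d k)) by (apply Hp3; lia). lia.
Qed.

Definition NoBump (d : nat -> nat) n := forall p k, p + 2 <= k -> k <= n ->
  ~ (forall l, p < l < k -> d l > Nat.max (d p) (d k)).

Lemma inc_mono (d : nat -> nat) j n : (forall i, j <= i -> i < n -> d i <= d (S i)) ->
  forall x y, j <= x -> x <= y -> y <= n -> d x <= d y.
Proof.
  intros H x y Hx Hxy Hy. induction y as [|y IH].
  - assert (x=0) by lia. subst. lia.
  - destruct (Nat.eq_dec x (S y)). { subst; lia. }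
    assert (d x <= d y) by (apply IH; lia).
    specialize (H y ltac:(lia) ltac:(lia)). lia.
Qed.

Lemma dec_mono (d : nat -> nat) j : (forall i, i < j -> d (S i) <= d i) ->
  forall x y, x <= y -> y <= j -> d y <= d x.
Proof.
  intros H x y Hxy Hy. induction y as [|y IH].
  - assert (x=0) by lia. subst. lia.
  - destruct (Nat.eq_dec x (S y)). { subst; lia. }
    assert (d y <= d x) by (apply IH; lia).
    specialize (H y ltac:(lia)). lia.
Qed.

Lemma valley (d : nat -> nat) n : NoBump d n ->
  exists j, j <= n /\ (forall i, i < j -> d (S i) <= d i) /\
            (forall i, j <= i -> i < n -> d i <= d (S i)).
Proof.
  induction n as [|n IH]; intros NB.
  - exists 0. split; [lia|split; intros; lia].
  - destruct IH as [j [Hj1 [Hj2 Hj3]]].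
    { intros p k Hpk Hk. apply NB; lia. }
    destruct (le_lt_dec (d n) (d (S n))) as [Hl|Hl].
    + exists j. split; [lia|split; [auto|]].
      intros i Hi1 Hi2. destruct (Nat.eq_dec i n). { subst; auto. } apply Hj3; lia.
    + exists (S n). split; [lia|split; [|intros; lia]].
      intros i Hi. destruct (lt_dec i j) as [h|h]; [auto|].
      destruct (Nat.eq_dec i n) as [e|e]; [subst; lia|].
      destruct (le_lt_dec (d (S i)) (d i)) as [h2|h2]; [auto|exfalso].
      assert (d (S i) <= d n) by (apply (inc_mono d j n Hj3); lia).
      destruct (bump d i n (S n)) as [p [k [B1 [B2 [B3 B4]]]]]; try lia.
      apply (NB p k); auto; lia.
Qed.

Lemma mem_char (I : mideal) (m : nat) (a b : nat -> nat) :
  is_monomial_ideal I ->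
  (forall u, Gens I u <-> exists i, i <= m /\ u = (a i, b i)) ->
  forall c e, I (c, e) <-> exists i, i <= m /\ a i <= c /\ b i <= e.
Proof.
  intros HI HG c e. split.
  - intros H.
    assert (K : forall n u, mdeg u <= n -> I u ->
               exists i, i <= m /\ a i <= fst u /\ b i <= snd u).
    { induction n as [|n IHn]; intros [u1 u2] Hu HIu;
      destruct (classic (Gens I (u1,u2))) as [G|G].
      1,3: apply HG in G; destruct G as [i [Hi E]]; injection E; intros; subst;
           exists i; simpl; lia.
      all: assert (exists v, I v /\ mdiv v (u1,u2) /\ v <> (u1,u2))
             as [[v1 v2] [Hv1 [Hv2 Hv3]]] by
        (apply NNPP; intro C; apply G; split; [exact HIu|];
         intros v Hv Hdv; apply NNPP; intro Hne; apply C; exists v; auto).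
      all: unfold mdiv, mdeg in *; simpl in *.
      - exfalso. apply Hv3. f_equal; lia.
      - assert (v1 + v2 < u1 + u2).
        { destruct (Nat.eq_dec v1 u1), (Nat.eq_dec v2 u2); subst; [contradiction|lia|lia|lia]. }
        destruct (IHn (v1,v2)) as [i [Hi [H1 H2]]]; [unfold mdeg; simpl; lia|auto|].
        simpl in *. exists i; lia. }
    destruct (K (mdeg (c,e)) (c,e) (le_n _) H) as [i Hi]. exists i; exact Hi.
  - intros [i [Hi [H1 H2]]].
    apply (HI (a i, b i)).
    + apply HG. exists i; auto.
    + split; simpl; auto.
Qed.

Definition Conv (I : mideal) j := forall c' t c, c' <= t -> t <= c -> c <= j ->
  I (c, j - c) -> I (c', j - c') -> I (t, j - t).

Lemma gens_comp (I : mideal) : is_monomial_ideal I ->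
  forall j w, Gens (comp I j) w <-> I w /\ mdeg w = j.
Proof.
  intros HI j [w1 w2]. split.
  - intros [[u [Hu [Hd Hdiv]]] Hmin].
    assert (u = (w1,w2)).
    { apply Hmin; auto. exists u. split; auto. split; auto. split; lia. }
    subst. auto.
  - intros [Hw Hd]. split.
    + exists (w1,w2). split; auto. split; auto. split; simpl; lia.
    + intros [v1 v2] [[u1 u2] [Hu [Hdu Huv]]] Hvw.
      unfold mdiv, mdeg in *; simpl in *. f_equal; lia.
Qed.

Lemma CP_Conv (I : mideal) : is_monomial_ideal I ->
  componentwise_polymatroidal I -> forall j, Conv I j.
Proof.
  intros HI CP j c' t c H1 H2 H3 Hc Hc'.
  assert (nz : nonzero (comp I j)).
  { exists (c, j - c). exists (c, j - c). split; auto. split.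
    unfold mdeg; simpl; lia. split; simpl; lia. }
  destruct (CP j nz) as [_ EX].
  assert (K : forall k, k <= c - t -> I (c - k, j - (c - k))).
  { induction k as [|k IH]; intros Hk.
    - rewrite Nat.sub_0_r. exact Hc.
    - specialize (IH ltac:(lia)).
      destruct (EX (c - k, j - (c - k)) (c', j - c')) with (z := false)
        as [w [Hw1 Hw2]].
      + apply gens_comp; auto. split; auto. unfold mdeg; simpl; lia.
      + apply gens_comp; auto. split; auto. unfold mdeg; simpl; lia.
      + simpl. lia.
      + destruct w; simpl in Hw1; [|lia].
        unfold exch, incr, decr in Hw2; simpl in Hw2.
        destruct Hw2 as [u [Hu [_ Hdiv]]].
        apply (HI u); auto.
        unfold mdiv in *; simpl in *. lia. }
  specialize (K (c - t) ltac:(lia)).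
  replace (c - (c - t)) with t in K by lia. exact K.
Qed.

Lemma Conv_CP (I : mideal) : is_monomial_ideal I ->
  (forall j, Conv I j) -> componentwise_polymatroidal I.
Proof.
  intros HI HC j _. split.
  - exists j. intros u Hu. apply gens_comp in Hu; tauto.
  - intros [u1 u2] [v1 v2] Hu Hv z Hz.
    apply gens_comp in Hu; auto. apply gens_comp in Hv; auto.
    destruct Hu as [Iu Du]. destruct Hv as [Iv Dv].
    unfold mdeg in *; simpl in *.
    destruct z; simpl in Hz.
    + exists false. simpl. split; [lia|].
      unfold exch, incr, decr; simpl.
      exists (u1 + 1, u2 - 1). split.
      * replace (u2 - 1) with (j - (u1 + 1)) by lia.
        apply (HC j u1 (u1+1) v1); try lia.
        -- replace (j - v1) with v2 by lia. auto.
        -- replace (j - u1) with u2 by lia. auto.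
      * split; [unfold mdeg; simpl; lia|split; simpl; lia].
    + exists true. simpl. split; [lia|].
      unfold exch, incr, decr; simpl.
      exists (u1 - 1, u2 + 1). split.
      * replace (u2 + 1) with (j - (u1 - 1)) by lia.
        apply (HC j v1 (u1-1) u1); try lia.
        -- replace (j - u1) with u2 by lia. auto.
        -- replace (j - v1) with v2 by lia. auto.
      * split; [unfold mdeg; simpl; lia|split; simpl; lia].
Qed.

Lemma amono (m : nat) (a : nat -> nat) : (forall i, i < m -> a (S i) < a i) ->
  forall i k, i <= k -> k <= m -> a k + (k - i) <= a i.
Proof.
  intros H i k Hik Hk. induction k as [|k IH].
  - assert (i = 0) by lia; subst; simpl; lia.
  - destruct (Nat.eq_dec i (S k)). { subst. rewrite Nat.sub_diag; lia. }
    specialize (IH ltac:(lia) ltac:(lia)). specialize (H k ltac:(lia)). lia.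
Qed.

Lemma bmono (m : nat) (b : nat -> nat) : (forall i, i < m -> b i < b (S i)) ->
  forall i k, i <= k -> k <= m -> b i + (k - i) <= b k.
Proof.
  intros H i k Hik Hk. induction k as [|k IH].
  - assert (i = 0) by lia; subst; simpl; lia.
  - destruct (Nat.eq_dec i (S k)). { subst. rewrite Nat.sub_diag; lia. }
    specialize (IH ltac:(lia) ltac:(lia)). specialize (H k ltac:(lia)). lia.
Qed.

Lemma gap1 (I : mideal) (m : nat) (a b : nat -> nat) :
  (forall c e, I (c, e) <-> exists i, i <= m /\ a i <= c /\ b i <= e) ->
  (forall i, i < m -> a (S i) < a i) ->
  (forall i, i < m -> b i < b (S i)) ->
  (forall j, Conv I j) ->
  forall i k j, i < k -> k <= m -> a i + b i <= j -> a k + b k <= j ->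
  (forall l, i < l -> l < k -> a l + b l > j) -> a i + b k <= j + 1.
Proof.
  intros M Ha Hb HC i k j H1 H2 H3 H4 H5.
  destruct (le_lt_dec (a i + b k) (j+1)) as [h|h]; auto; exfalso.
  pose proof (amono m a Ha i k ltac:(lia) H2) as Aik.
  assert (Ht : I (a i - 1, j - (a i - 1))).
  { apply (HC j (j - b k) (a i - 1) (a i)); try lia.
    - apply M. exists i. split; [lia|split; lia].
    - apply M. exists k. split; [lia|split; lia]. }
  apply M in Ht. destruct Ht as [l [Hl [Hl1 Hl2]]].
  destruct (le_lt_dec l i) as [c1|c1].
  - pose proof (amono m a Ha l i c1 ltac:(lia)). lia.
  - destruct (le_lt_dec k l) as [c2|c2].
    + pose proof (bmono m b Hb k l c2 Hl). lia.
    + specialize (H5 l c1 c2). lia.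
Qed.

Lemma gap2 (m : nat) (a b : nat -> nat) :
  (forall i, i < m -> a (S i) < a i) ->
  (forall i, i < m -> b i < b (S i)) ->
  let d := fun i => a i + b i in
  (forall i, i < m -> d i > d (S i) -> a i - 1 > a (S i) /\ b (S i) = b i + 1) ->
  (forall i, i < m -> d i < d (S i) -> b i + 1 < b (S i) /\ a (S i) = a i - 1) ->
  (forall i, i < m -> d i = d (S i) -> b (S i) = b i + 1 /\ a (S i) = a i - 1) ->
  forall j0, j0 <= m -> (forall i, i < j0 -> d (S i) <= d i) ->
      (forall i, j0 <= i -> i < m -> d i <= d (S i)) ->
  forall p k j, p < k -> k <= m -> a p + b p <= j -> a k + b k <= j ->
  (forall l, p < l -> l < k -> a l + b l > j) -> a p + b k <= j + 1.
Proof.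
  intros Ha Hb d C1 C2 C3 j0 Hj0 Hdec Hinc p k j H1 H2 H3 H4 H5.
  subst d; cbv beta in *.
  destruct (Nat.eq_dec k (S p)) as [e|e].
  - subst k. pose proof (Ha p ltac:(lia)). pose proof (Hb p ltac:(lia)).
    destruct (lt_eq_lt_dec (a p + b p) (a (S p) + b (S p))) as [[c|c]|c].
    + destruct (C2 p ltac:(lia) c). lia.
    + destruct (C3 p ltac:(lia) c). lia.
    + destruct (C1 p ltac:(lia) c). lia.
  - exfalso. specialize (H5 (S p) ltac:(lia) ltac:(lia)).
    destruct (le_lt_dec (S p) j0) as [c|c].
    + pose proof (dec_mono (fun i => a i + b i) j0 Hdec p (S p) ltac:(lia) c).
      cbv beta in *. lia.
    + pose proof (inc_mono (fun i => a i + b i) j0 m Hinc (S p) k ltac:(lia) ltac:(lia) H2).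
      cbv beta in *. lia.
Qed.

Lemma conv2 (I : mideal) (m : nat) (a b : nat -> nat) :
  (forall c e, I (c, e) <-> exists i, i <= m /\ a i <= c /\ b i <= e) ->
  (forall i, i < m -> a (S i) < a i) ->
  (forall p k j, p < k -> k <= m -> a p + b p <= j -> a k + b k <= j ->
     (forall l, p < l -> l < k -> a l + b l > j) -> a p + b k <= j + 1) ->
  forall j, Conv I j.
Proof.
  intros M Ha Hgap j c' t c H1 H2 H3 Hc Hc'.
  apply M in Hc. apply M in Hc'. apply M.
  destruct Hc as [g [Hg [Hg1 Hg2]]]. destruct Hc' as [g' [Hg' [Hg'1 Hg'2]]].
  destruct (le_lt_dec (a g) t) as [e1|e1].
  { exists g. split; [lia|split; lia]. }
  destruct (le_lt_dec (b g') (j - t)) as [e2|e2].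
  { exists g'. split; [lia|split; lia]. }
  assert (g < g').
  { destruct (le_lt_dec g' g) as [h|h]; auto.
    pose proof (amono m a Ha g' g h Hg). lia. }
  destruct (largest (fun x => a x + b x <= j /\ a x > t) g g') as [p [Hp1 [[Hp2 Hp3] Hp4]]];
    [lia|split; lia|].
  assert (p < g').
  { destruct (Nat.eq_dec p g'); [subst; lia|lia]. }
  destruct (smallest (fun x => a x + b x <= j) (S p) g') as [k [Hk1 [Hk2 Hk3]]]; [lia|lia|].
  assert (a k <= t).
  { destruct (le_lt_dec (a k) t) as [h|h]; auto. exfalso. apply (Hp4 k); [lia|split; auto]. }
  pose proof (Hgap p k j ltac:(lia) ltac:(lia) Hp2 Hk2) as G.
  assert (a p + b k <= j + 1).
  { apply G. intros l Hl1 Hl2. destruct (le_lt_dec (a l + b l) j) as [h|h]; auto.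
    exfalso. apply (Hk3 l); [lia|auto]. }
  exists k. split; [lia|split; lia].
Qed.

Theorem theorem2p6 (I : mideal) (m : nat) (a b : nat -> nat) :
  is_monomial_ideal I ->
  (forall u, Gens I u <-> exists i, i <= m /\ u = (a i, b i)) ->
  (forall i, i < m -> a (S i) < a i) ->
  (forall i, i < m -> b i < b (S i)) ->
  let d := fun i => a i + b i in
  componentwise_polymatroidal I <->
  ((forall i, i < m -> d i > d (S i) -> a i - 1 > a (S i) /\ b (S i) = b i + 1) /\
   (forall i, i < m -> d i < d (S i) -> b i + 1 < b (S i) /\ a (S i) = a i - 1) /\
   (forall i, i < m -> d i = d (S i) -> b (S i) = b i + 1 /\ a (S i) = a i - 1) /\
   (exists j, j <= m /\
      (forall i, i < j -> d (S i) <= d i) /\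
      (forall i, j <= i -> i < m -> d i <= d (S i)))).
Proof.
  intros HI HG Ha Hb d.
  pose proof (mem_char I m a b HI HG) as M.
  split.
  - intros CP. pose proof (CP_Conv I HI CP) as HC.
    pose proof (gap1 I m a b M Ha Hb HC) as G.
    subst d; cbv beta.
    split; [|split; [|split]].
    + intros i Hi Hd. pose proof (G i (S i) (a i + b i) ltac:(lia) ltac:(lia) ltac:(lia) ltac:(lia)
        ltac:(intros; lia)). pose proof (Hb i Hi). lia.
    + intros i Hi Hd. pose proof (G i (S i) (a (S i) + b (S i)) ltac:(lia) ltac:(lia) ltac:(lia) ltac:(lia)
        ltac:(intros; lia)). pose proof (Ha i Hi). lia.
    + intros i Hi Hd. pose proof (G i (S i) (a i + b i) ltac:(lia) ltac:(lia) ltac:(lia) ltac:(lia)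
        ltac:(intros; lia)). pose proof (Ha i Hi). pose proof (Hb i Hi). lia.
    + apply (valley (fun i => a i + b i) m).
      intros p k H1 H2 Hall. cbv beta in Hall.
      pose proof (G p k (Nat.max (a p + b p) (a k + b k)) ltac:(lia) H2 ltac:(lia) ltac:(lia)
        ltac:(intros l h1 h2; apply Hall; lia)).
      pose proof (amono m a Ha p k ltac:(lia) H2).
      pose proof (bmono m b Hb p k ltac:(lia) H2). lia.
  - intros [C1 [C2 [C3 [j0 [Hj0 [Hdec Hinc]]]]]].
    apply Conv_CP; auto.
    apply (conv2 I m a b M Ha).
    exact (gap2 m a b Ha Hb C1 C2 C3 j0 Hj0 Hdec Hinc).
Qed.
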